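(* Let $\kappa>0$, $u_0>0$, and let $u$ be the solution of $\frac{d}{dr}\big(u'/\sqrt{1+u'^2}\big)=\kappa u$, $u(0)=u_0$, $u'(0)=0$. Let $a>0$ and $0\le\gamma<\pi/2$ be such that $u$ is defined on $[0,a)$ and $\sin\psi(a)=\cos\gamma$, where $\sin\psi=u'/\sqrt{1+u'^2}$ (extended continuously to $r=a$). Then $$u(a)<\frac{\cos\gamma}{\kappa a}-\frac a2\tan\gamma+\frac a{2\cos^2\gamma}\Big(\frac\pi2-\gamma\Big).$$
   Context: $u$ is the profile of a $\kappa$-cylindrical capillary surface $z=u(x)$ between vertical plates $x=\pm a$ with contact angle $\gamma$; $u(a)$ is the outer height. *)

(* Defs.v *)
From Stdlib Require Import Reals Lra.
From Coquelicot Require Import Coquelicot.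
Open Scope R_scope.

Definition sin_psi (du : R -> R) (r : R) : R := du r / sqrt (1 + du r ^ 2).

(* Main.v *)
Require Import Defs.
From Stdlib Require Import Reals Lra.
From Coquelicot Require Import Coquelicot.
Open Scope R_scope.

Lemma ev_right (p q : R) (P : R -> Prop) : p < q ->
  (forall x, p < x < q -> P x) -> at_right p P.
Proof.
  intros Hpq HP. assert (Hd : 0 < q - p) by lra.
  exists (mkposreal _ Hd). intros y Hy Hpy. apply HP.
  change (Rabs (y - p) < q - p) in Hy. apply Rabs_def2 in Hy. lra.
Qed.

Lemma ev_left (p q : R) (P : R -> Prop) : p < q ->
  (forall x, p < x < q -> P x) -> at_left q P.
Proof.
  intros Hpq HP. assert (Hd : 0 < q - p) by lra.
  exists (mkposreal _ Hd). intros y Hy Hpy. apply HP.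
  change (Rabs (y - q) < q - p) in Hy. apply Rabs_def2 in Hy. lra.
Qed.

Lemma lim_le {T} (F : (T -> Prop) -> Prop) {FF : ProperFilter F} (f : T -> R) L c :
  filterlim f F (locally L) -> F (fun x => f x <= c) -> L <= c.
Proof.
  intros Hl Hc. destruct (Rle_lt_dec L c) as [H|H]; auto.
  assert (He : 0 < L - c) by lra.
  pose proof (proj1 (filterlim_locally f L) Hl (mkposreal _ He)) as Hb.
  destruct (Hierarchy.filter_ex _ (filter_and _ _ Hb Hc)) as [x [Hx1 Hx2]].
  change (Rabs (f x - L) < L - c) in Hx1. apply Rabs_def2 in Hx1. lra.
Qed.

Lemma lim_ge {T} (F : (T -> Prop) -> Prop) {FF : ProperFilter F} (f : T -> R) L c :
  filterlim f F (locally L) -> F (fun x => c <= f x) -> c <= L.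
Proof.
  intros Hl Hc. destruct (Rle_lt_dec c L) as [H|H]; auto.
  assert (He : 0 < c - L) by lra.
  pose proof (proj1 (filterlim_locally f L) Hl (mkposreal _ He)) as Hb.
  destruct (Hierarchy.filter_ex _ (filter_and _ _ Hb Hc)) as [x [Hx1 Hx2]].
  change (Rabs (f x - L) < c - L) in Hx1. apply Rabs_def2 in Hx1. lra.
Qed.

Lemma lim_add {T} (F : (T -> Prop) -> Prop) {FF : Filter F} (f g : T -> R) a b :
  filterlim f F (locally a) -> filterlim g F (locally b) ->
  filterlim (fun x => f x + g x) F (locally (a + b)).
Proof.
  intros Hf Hg. eapply (filterlim_comp_2 f g Rplus Hf Hg).
  exact (@filterlim_plus R_AbsRing R_NormedModule a b).
Qed.

Lemma lim_mul {T} (F : (T -> Prop) -> Prop) {FF : Filter F} (f g : T -> R) a b :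
  filterlim f F (locally a) -> filterlim g F (locally b) ->
  filterlim (fun x => f x * g x) F (locally (a * b)).
Proof.
  intros Hf Hg. eapply (filterlim_comp_2 f g Rmult Hf Hg).
  exact (@filterlim_mult R_AbsRing a b).
Qed.

Lemma lim_const {T} (F : (T -> Prop) -> Prop) {FF : Filter F} (c : R) :
  filterlim (fun _ : T => c) F (locally c).
Proof. apply filterlim_const. Qed.

Lemma lim_eq {T} (F : (T -> Prop) -> Prop) (f : T -> R) a b :
  filterlim f F (locally a) -> a = b -> filterlim f F (locally b).
Proof. intros H ->. exact H. Qed.

Lemma lim_id_right p : filterlim (fun x => x) (at_right p) (locally p).
Proof. eapply filterlim_filter_le_1. apply filter_le_within. apply filterlim_id. Qed.
Lemma lim_id_left p : filterlim (fun x => x) (at_left p) (locally p).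
Proof. eapply filterlim_filter_le_1. apply filter_le_within. apply filterlim_id. Qed.

Lemma lim_cont {T} (F : (T -> Prop) -> Prop) (f : T -> R) (g : R -> R) a :
  filterlim f F (locally a) -> (forall x, ex_derive g x) ->
  filterlim (fun x => g (f x)) F (locally (g a)).
Proof.
  intros Hf Hg. eapply filterlim_comp. exact Hf. apply (@ex_derive_continuous R_AbsRing R_NormedModule). apply Hg.
Qed.

Lemma mvt (f df : R -> R) p q x y : p < x -> x <= y -> y < q ->
  (forall t, p < t < q -> is_derive f t (df t)) ->
  exists c, x <= c <= y /\ f y - f x = df c * (y - x).
Proof.
  intros H1 H2 H3 Hd.
  destruct (MVT_gen f x y df) as [c [Hc Heq]].
  - intros t Ht. rewrite Rmin_left in Ht by lra. rewrite Rmax_right in Ht by lra. apply Hd; lra.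
  - intros t Ht. rewrite Rmin_left in Ht by lra. rewrite Rmax_right in Ht by lra.
    apply continuity_pt_filterlim. apply (@ex_derive_continuous R_AbsRing R_NormedModule). exists (df t). apply Hd; lra.
  - rewrite Rmin_left in Hc by lra. rewrite Rmax_right in Hc by lra. exists c; split; auto.
Qed.

Lemma incr (f df : R -> R) p q x y :
  (forall t, p < t < q -> is_derive f t (df t)) -> (forall t, p < t < q -> 0 < df t) ->
  p < x -> x < y -> y < q -> f x < f y.
Proof.
  intros Hd Hp H1 H2 H3. destruct (mvt f df p q x y) as [c [Hc Heq]]; try lra; auto.
  assert (0 < df c) by (apply Hp; lra).
  assert (0 < df c * (y - x)) by (apply Rmult_lt_0_compat; lra). lra.
Qed.

Lemma lim_cont' {T} (F : (T -> Prop) -> Prop) (f : T -> R) (g : R -> R) a :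
  filterlim f F (locally a) -> ex_derive g a ->
  filterlim (fun x => g (f x)) F (locally (g a)).
Proof.
  intros Hf Hg. eapply filterlim_comp. exact Hf. apply (@ex_derive_continuous R_AbsRing R_NormedModule). apply Hg.
Qed.

Lemma cont_of_derive f x l : is_derive f x l -> continuity_pt f x.
Proof.
  intros H. apply continuity_pt_filterlim. apply (@ex_derive_continuous R_AbsRing R_NormedModule). exists l. exact H.
Qed.

Lemma is_derive_eq (f : R -> R) (x l l' : R) : is_derive f x l -> l = l' -> is_derive f x l'.
Proof. intros H <-. exact H. Qed.

Lemma prod_le k a1 a2 b1 b2 : 0 < k -> 0 <= a1 <= a2 -> 0 <= b1 <= b2 -> k * a1 * b1 <= k * a2 * b2.
Proof.
  intros Hk Ha Hb. apply Rmult_le_compat. apply Rmult_le_pos; lra. lra.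
  apply Rmult_le_compat_l; lra. lra.
Qed.

Lemma is_derive_asin y : -1 < y < 1 -> is_derive asin y (1 / sqrt (1 - y²)).
Proof.
  intros Hy. apply is_derive_Reals. apply derive_pt_eq_1 with (derivable_pt_asin y Hy).
  apply derive_pt_asin.
Qed.

Definition Psi (t : R) := t - sin t * cos t.

Lemma Psi_mono x y : x <= y -> Psi x <= Psi y.
Proof.
  intros Hxy.
  destruct (mvt Psi (fun t => 2 * sin t ^ 2) (x - 1) (y + 1) x y) as [c [Hc Ec]]; try lra.
  - intros t _. unfold Psi. auto_derive. auto. pose proof (sin2_cos2 t). unfold Rsqr in H. nra.
  - assert (0 <= 2 * sin c ^ 2 * (y - x)). { apply Rmult_le_pos; [|lra]. pose proof (pow2_ge_0 (sin c)); lra. } lra.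
Qed.

Lemma asin_mono x y : -1 <= x -> x <= y -> y <= 1 -> asin x <= asin y.
Proof.
  intros H1 H2 H3. destruct (Rle_lt_dec (asin x) (asin y)) as [H|H]; auto.
  pose proof (asin_bound x). pose proof (asin_bound y).
  pose proof (sin_increasing_1 (asin y) (asin x) ltac:(lra) ltac:(lra) ltac:(lra) ltac:(lra) H) as Hs.
  rewrite !sin_asin in Hs by lra. lra.
Qed.
Theorem mainTheorem11 (kappa u0 a gamma : R) (u du : R -> R) :
  0 < kappa -> 0 < u0 -> 0 < a -> 0 <= gamma < PI / 2 ->
  u 0 = u0 ->
  filterlim (fun h => (u h - u 0) / h) (at_right 0) (locally 0) ->
  (forall r, 0 < r < a -> is_derive u r (du r)) ->
  (forall r, 0 < r < a -> is_derive (sin_psi du) r (kappa * u r)) ->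
  filterlim u (at_left a) (locally (u a)) ->
  filterlim (sin_psi du) (at_left a) (locally (cos gamma)) ->
  u a < cos gamma / (kappa * a) - a / 2 * tan gamma
        + a / (2 * cos gamma ^ 2) * (PI / 2 - gamma).
Proof.
  intros Hk Hu0 Ha Hg H0 Hq Hdu Hds Hua Hsa.
  set (s := sin_psi du) in *.
  assert (Hsq : forall r, 0 < sqrt (1 + du r ^ 2) /\ sqrt (1 + du r ^ 2) ^ 2 = 1 + du r ^ 2).
  { intros r. split. apply sqrt_lt_R0. nra. rewrite pow2_sqrt; nra. }
  assert (Hsd : forall r, s r = du r / sqrt (1 + du r ^ 2)) by reflexivity.
  assert (Hsdu : forall r, Rabs (s r) <= Rabs (du r)).
  { intros r. rewrite Hsd. destruct (Hsq r) as [H1 H2]. unfold Rdiv. rewrite Rabs_mult.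
    rewrite Rabs_inv. rewrite (Rabs_pos_eq (sqrt _)) by lra.
    assert (H3 : 1 <= sqrt (1 + du r ^ 2)). { rewrite <- sqrt_1 at 1. apply sqrt_le_1_alt. pose proof (pow2_ge_0 (du r)); lra. }
    assert (0 <= Rabs (du r)) by apply Rabs_pos.
    assert (/ sqrt (1 + du r ^ 2) <= 1). { pose proof (Rinv_le_contravar 1 _ Rlt_0_1 H3) as HH. rewrite Rinv_1 in HH. exact HH. }
    nra. }
  assert (Hw : forall r, 1 - s r ^ 2 = (/ sqrt (1 + du r ^ 2)) ^ 2).
  { intros r. rewrite Hsd. destruct (Hsq r) as [H1 H2].
    assert (E : (/ sqrt (1 + du r ^ 2)) ^ 2 * sqrt (1 + du r ^ 2) ^ 2 = 1) by (field; lra).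
    unfold Rdiv; rewrite Rpow_mult_distr. rewrite <- E at 1. rewrite H2. ring. }
  assert (Hw2 : forall r, sqrt (1 - s r ^ 2) = / sqrt (1 + du r ^ 2)).
  { intros r. rewrite Hw. apply sqrt_pow2. destruct (Hsq r). left. apply Rinv_0_lt_compat. lra. }
  assert (Hur : filterlim u (at_right 0) (locally u0)).
  { apply filterlim_ext_loc with (f := fun h => u 0 + h * ((u h - u 0)/h)).
    - apply ev_right with (q:=1). lra. intros; field; lra.
    - apply lim_eq with (a := u 0 + 0 * 0). apply (lim_add (at_right 0)). apply (lim_const (at_right 0)). apply (lim_mul (at_right 0)).
      apply lim_id_right. exact Hq. change (u 0 + 0 * 0 = u0 :> R). rewrite H0; ring. }
  assert (Hsr : filterlim s (at_right 0) (locally 0)).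
  { apply filterlim_locally. intros eps.
    assert (He6 : 0 < eps / 6) by (destruct eps; simpl; lra).
    destruct (proj1 (filterlim_locally _ _) Hq (mkposreal _ He6)) as [d1 Hd1].
    destruct (proj1 (filterlim_locally _ _) Hur (mkposreal _ Rlt_0_1)) as [d2 Hd2].
    set (M := kappa * (Rabs u0 + 1)).
    assert (HM : 0 < M). { unfold M. assert (0 <= Rabs u0) by apply Rabs_pos. nra. }
    assert (He2 : 0 < eps / (2 * M)). { destruct eps; simpl. apply Rdiv_lt_0_compat; lra. }
    assert (Hdp : 0 < Rmin (Rmin d1 d2) (Rmin a (eps / (2 * M)))).
    { destruct d1, d2; simpl. repeat apply Rmin_pos; lra. }
    exists (mkposreal _ Hdp). intros r Hr Hr0. simpl in Hr.
    change (Rabs (r - 0) < Rmin (Rmin d1 d2) (Rmin a (eps / (2 * M)))) in Hr.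
    rewrite Rminus_0_r, Rabs_pos_eq in Hr by lra.
    assert (Hr1 : r < d1) by (eapply Rlt_le_trans; [exact Hr|]; eapply Rle_trans; apply Rmin_l).
    assert (Hr2 : r < d2) by (eapply Rlt_le_trans; [exact Hr|]; eapply Rle_trans; [apply Rmin_l| apply Rmin_r]).
    assert (Hr3 : r < a) by (eapply Rlt_le_trans; [exact Hr|]; eapply Rle_trans; [apply Rmin_r| apply Rmin_l]).
    assert (Hr4 : r < eps / (2 * M)) by (eapply Rlt_le_trans; [exact Hr|]; eapply Rle_trans; [apply Rmin_r| apply Rmin_r]).
    assert (HA : Rabs ((u r - u 0) / r - 0) < eps / 6).
    { apply (Hd1 r). change (Rabs (r - 0) < d1). rewrite Rminus_0_r, Rabs_pos_eq; lra. exact Hr0. }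
    assert (HB : Rabs ((u (r/2) - u 0) / (r/2) - 0) < eps / 6).
    { apply (Hd1 (r/2)). change (Rabs (r/2 - 0) < d1). rewrite Rminus_0_r, Rabs_pos_eq; lra. lra. }
    set (A := (u r - u 0) / r) in *. set (B := (u (r/2) - u 0) / (r/2)) in *.
    assert (EA : u r - u 0 = r * A) by (unfold A; field; lra).
    assert (EB : u (r/2) - u 0 = r/2 * B) by (unfold B; field; lra).
    destruct (mvt u du 0 a (r/2) r) as [xi [Hxi Exi]]; try lra. exact Hdu.
    assert (Edu : du xi = 2 * A - B).
    { apply Rmult_eq_reg_r with (r - r/2); [|lra]. rewrite <- Exi. lra. }
    assert (Hsxi : Rabs (s xi) < eps / 2).
    { eapply Rle_lt_trans. apply Hsdu. rewrite Edu.
      rewrite Rminus_0_r in HA, HB. eapply Rle_lt_trans. apply Rabs_triang.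
      rewrite Rabs_Ropp, Rabs_mult, (Rabs_pos_eq 2) by lra. lra. }
    destruct (mvt s (fun t => kappa * u t) 0 a xi r) as [c [Hc Ec]]; try lra. exact Hds.
    assert (Huc : Rabs (u c - u0) < 1).
    { apply (Hd2 c). change (Rabs (c - 0) < d2). rewrite Rminus_0_r, Rabs_pos_eq; lra. lra. }
    assert (Huc2 : Rabs (u c) < Rabs u0 + 1).
    { replace (u c) with ((u c - u0) + u0) by ring. eapply Rle_lt_trans. apply Rabs_triang. lra. }
    assert (Hdiff : Rabs (s r - s xi) < eps / 2).
    { rewrite Ec. rewrite !Rabs_mult, (Rabs_pos_eq kappa), (Rabs_pos_eq (r - xi)) by lra.
      assert (Hm : M * r < eps / 2).
      { apply Rmult_lt_compat_l with (r := M) in Hr4; auto.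
        replace (M * (eps / (2 * M))) with (eps / 2) in Hr4 by (field; lra). exact Hr4. }
      unfold M in Hm. assert (0 <= Rabs (u c)) by apply Rabs_pos.
      assert (kappa * Rabs (u c) <= kappa * (Rabs u0 + 1)) by (apply Rmult_le_compat_l; lra).
      assert (kappa * Rabs (u c) * (r - xi) <= kappa * (Rabs u0 + 1) * (r - xi)) by (apply Rmult_le_compat_r; lra).
      assert (kappa * (Rabs u0 + 1) * (r - xi) <= kappa * (Rabs u0 + 1) * r) by (apply Rmult_le_compat_l; [unfold M in HM; lra | lra]).
      lra. }
    change (Rabs (s r - 0) < eps). rewrite Rminus_0_r.
    replace (s r) with ((s r - s xi) + s xi) by ring. eapply Rle_lt_trans. apply Rabs_triang.
    lra. }
  set (E := fun x => sqrt (1 - s x ^ 2) + kappa / 2 * u x ^ 2).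
  assert (HdE : forall r, 0 < r < a -> is_derive E r 0).
  { intros r Hr. destruct (Hsq r) as [Ht1 Ht2].
    assert (Hpos : 0 < 1 - s r ^ 2). { rewrite Hw. apply pow_lt. apply Rinv_0_lt_compat. lra. }
    assert (Hf : is_derive (fun y => sqrt (1 - y ^ 2)) (s r) (- s r / sqrt (1 - s r ^ 2))).
    { auto_derive. lra. replace (1 + - (s r * (s r * 1))) with (1 - s r ^ 2) by ring. field. apply Rgt_not_eq, sqrt_lt_R0. lra. }
    assert (Hg2 : is_derive (fun y => kappa / 2 * y ^ 2) (u r) (kappa * u r)).
    { auto_derive. auto. field. }
    pose proof (is_derive_comp _ _ _ _ _ Hf (Hds r Hr)) as D1.
    pose proof (is_derive_comp _ _ _ _ _ Hg2 (Hdu r Hr)) as D2.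
    pose proof (is_derive_plus _ _ _ _ _ D1 D2) as D3.
    apply (is_derive_eq _ _ _ _ D3).
    change (kappa * u r * (- s r / sqrt (1 - s r ^ 2)) + du r * (kappa * u r) = 0).
    rewrite Hw2, Hsd. field. lra. }
  assert (Hcst : forall x y, 0 < x -> x <= y -> y < a -> E x = E y).
  { intros x y Hx Hxy Hy. destruct (mvt E (fun _ => 0) 0 a x y) as [c [_ Hc]]; auto. lra. }
  assert (HElim : filterlim E (at_right 0) (locally (sqrt (1 - 0 ^ 2) + kappa / 2 * u0 ^ 2))).
  { apply (lim_add (at_right 0)).
    - apply (lim_cont' (at_right 0) s (fun y => sqrt (1 - y ^ 2))). exact Hsr. auto_derive. lra.
    - apply (lim_cont' (at_right 0) u (fun y => kappa / 2 * y ^ 2)). exact Hur. auto_derive. auto. }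
  assert (Hu2 : forall r, 0 < r < a -> u0 ^ 2 <= u r ^ 2).
  { intros r Hr. assert (HL := lim_le (at_right 0) E _ (E r) HElim).
    assert (HH : sqrt (1 - 0 ^ 2) + kappa / 2 * u0 ^ 2 <= E r).
    { apply HL. apply ev_right with (q := r). lra. intros x Hx. right. apply Hcst; lra. }
    unfold E in HH. rewrite Hw2 in HH. replace (1 - 0 ^ 2) with 1 in HH by ring. rewrite sqrt_1 in HH.
    destruct (Hsq r) as [Ht1 Ht2].
    assert (H3 : 1 <= sqrt (1 + du r ^ 2)). { rewrite <- sqrt_1 at 1. apply sqrt_le_1_alt. pose proof (pow2_ge_0 (du r)); lra. }
    assert (/ sqrt (1 + du r ^ 2) <= 1). { pose proof (Rinv_le_contravar 1 _ Rlt_0_1 H3) as HH'. rewrite Rinv_1 in HH'. exact HH'. }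
    assert (kappa / 2 * u0 ^ 2 <= kappa / 2 * u r ^ 2) by lra.
    apply Rmult_le_reg_l with (kappa / 2). lra. lra. }
  assert (Hpos : forall r, 0 < r < a -> 0 < u r).
  { intros r Hr. destruct (Rlt_le_dec 0 (u r)) as [H|H]; auto. exfalso.
    assert (Hne : u r < 0).
    { destruct H as [H|H]; auto. exfalso. pose proof (Hu2 r Hr). rewrite H in H1. 
      assert (0 < u0 ^ 2) by (apply pow_lt; lra). simpl in H1. lra. }
    assert (Hh : 0 < u0 / 2) by lra.
    pose proof (proj1 (filterlim_locally _ _) Hur (mkposreal _ Hh)) as Hb.
    assert (Hr' : at_right 0 (fun x => 0 < x < r)) by (apply ev_right with (q := r); [lra | intros; lra]).
    destruct (Hierarchy.filter_ex _ (filter_and _ _ Hb Hr')) as [e [He1 He2]].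
    change (Rabs (u e - u0) < u0 / 2) in He1. apply Rabs_def2 in He1.
    destruct (Ranalysis5.IVT_interv (fun x => - u x) e r) as [z [Hz1 Hz2]].
    - intros t Ht. apply (cont_of_derive _ _ (- du t)). apply (is_derive_opp u t (du t)). apply Hdu; lra.
    - lra.
    - lra.
    - lra.
    - pose proof (Hu2 z ltac:(lra)). assert (u z = 0) by lra. rewrite H2 in H1.
      assert (0 < u0 ^ 2) by (apply pow_lt; lra). simpl in H1. lra. }
  assert (Hsinc : forall x y, 0 < x -> x < y -> y < a -> s x < s y).
  { intros x y Hx Hxy Hy. apply (incr s (fun t => kappa * u t) 0 a); auto.
    intros t Ht. apply Rmult_lt_0_compat; auto. }
  assert (Hspos : forall r, 0 < r < a -> 0 < s r).
  { intros r Hr. assert (0 <= s (r / 2)).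
    { apply (lim_le (at_right 0) s 0 (s (r/2)) Hsr). apply ev_right with (q := r/2). lra.
      intros x Hx. left. apply Hsinc; lra. }
    assert (s (r/2) < s r) by (apply Hsinc; lra). lra. }
  assert (Hdupos : forall r, 0 < r < a -> 0 < du r).
  { intros r Hr. pose proof (Hspos r Hr) as H. rewrite Hsd in H. destruct (Hsq r) as [Ht1 Ht2].
    replace (du r) with (du r / sqrt (1 + du r ^ 2) * sqrt (1 + du r ^ 2)) by (field; lra).
    apply Rmult_lt_0_compat; lra. }
  assert (Huinc : forall x y, 0 < x -> x < y -> y < a -> u x < u y).
  { intros x y Hx Hxy Hy. apply (incr u du 0 a); auto. }
  assert (Hule : forall x y, 0 < x -> x <= y -> y < a -> u x <= u y).
  { intros x y Hx Hxy Hy. destruct Hxy as [H|H]. left; apply Huinc; auto. right; subst; auto. }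
  assert (Hconv1 : forall r, 0 < r < a -> s r < kappa * u r * r).
  { intros r Hr.
    assert (Ha1 : s (r/2) - kappa * u (r/2) * (r/2) <= 0).
    { apply (lim_ge (at_right 0) s 0 _ Hsr). apply ev_right with (q := r/2). lra.
      intros x Hx. destruct (mvt s (fun t => kappa * u t) 0 a x (r/2)) as [c [Hc Ec]]; try lra. exact Hds.
      assert (kappa * u c * (r/2 - x) <= kappa * u (r/2) * (r/2)).
      { apply prod_le; auto. split. left; apply Hpos; lra. apply Hule; lra. lra. }
      lra. }
    destruct (mvt s (fun t => kappa * u t) 0 a (r/2) r) as [c [Hc Ec]]; try lra. exact Hds.
    assert (kappa * u c * (r - r/2) <= kappa * u r * (r - r/2)).
    { apply prod_le; auto. split. left; apply Hpos; lra. apply Hule; lra. lra. }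
    assert (kappa * u (r/2) * (r/2) < kappa * u r * (r/2)).
    { apply Rmult_lt_compat_r. lra. apply Rmult_lt_compat_l. lra. apply Huinc; lra. }
    lra. }
  assert (Hchord : forall r, 0 < r < a -> s r * a < r * cos gamma).
  { intros r Hr. set (m := kappa * u r).
    assert (Hm : 0 < m) by (apply Rmult_lt_0_compat; auto).
    assert (Hlim : filterlim (fun t => s t + - m * t) (at_left a) (locally (cos gamma + - m * a))).
    { apply (lim_add (at_left a)). exact Hsa. apply (lim_mul (at_left a)). apply (lim_const (at_left a)). apply lim_id_left. }
    assert (H1 : s r + - m * r <= cos gamma + - m * a).
    { apply (lim_ge (at_left a) _ _ _ Hlim). apply ev_left with (p := r). lra.
      intros t Ht. destruct (mvt s (fun t => kappa * u t) 0 a r t) as [c [Hc Ec]]; try lra. exact Hds.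
      assert (m * (t - r) <= kappa * u c * (t - r)).
      { unfold m. apply prod_le; auto. split. left; apply Hpos; lra. apply Hule; lra. lra. }
      lra. }
    pose proof (Hconv1 r Hr) as H2. fold m in H2.
    assert (s r * (a - r) < m * r * (a - r)) by (apply Rmult_lt_compat_r; lra).
    assert (m * (a - r) * r <= (cos gamma - s r) * r) by (apply Rmult_le_compat_r; lra).
    nra. }
  assert (Hc : 0 < cos gamma <= 1).
  { split. apply cos_gt_0; lra. apply COS_bound. }
  set (k := cos gamma / a).
  assert (Hk0 : 0 < k) by (unfold k; apply Rdiv_lt_0_compat; lra).
  assert (Hkr : forall r, 0 < r < a -> 0 < k * r < 1).
  { intros r Hr. split. apply Rmult_lt_0_compat; lra.
    assert (k * r < k * a) by (apply Rmult_lt_compat_l; lra).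
    replace (k * a) with (cos gamma) in H by (unfold k; field; lra). lra. }
  set (X := fun r => k * r / sqrt (1 - (k * r) ^ 2)).
  assert (HX : forall r, 0 < r < a -> du r < X r).
  { intros r Hr. pose proof (Hkr r Hr) as Hx. set (x := k * r) in *.
    assert (Hsx : s r < x).
    { pose proof (Hchord r Hr). unfold x, k. apply Rmult_lt_reg_r with a. lra.
      replace (cos gamma / a * r * a) with (r * cos gamma) by (field; lra). lra. }
    rewrite Hsd in Hsx. destruct (Hsq r) as [Ht1 Ht2]. pose proof (Hdupos r Hr) as Hd.
    set (t := sqrt (1 + du r ^ 2)) in *. set (d := du r) in *.
    assert (Hdt : d < x * t).
    { apply Rmult_lt_reg_r with (/ t). apply Rinv_0_lt_compat; lra.
      replace (x * t * / t) with x by (field; lra). exact Hsx. }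
    assert (Hw0 : 0 < 1 - x ^ 2) by nra.
    assert (Hw1 : 0 < sqrt (1 - x ^ 2)) by (apply sqrt_lt_R0; lra).
    assert (Hw2' : sqrt (1 - x ^ 2) ^ 2 = 1 - x ^ 2) by (apply pow2_sqrt; lra).
    set (w := sqrt (1 - x ^ 2)) in *. unfold X. fold x. fold w.
    assert (Hd2 : d ^ 2 < x ^ 2 * t ^ 2).
    { rewrite <- Rpow_mult_distr. simpl. rewrite !Rmult_1_r. apply Rmult_le_0_lt_compat; lra. }
    rewrite Ht2 in Hd2.
    assert (Hdw : d * w < x).
    { destruct (Rlt_le_dec (d * w) x) as [H|H]; auto. exfalso.
      assert (Hxx : x ^ 2 <= (d * w) ^ 2) by (apply pow_incr; lra).
      rewrite Rpow_mult_distr, Hw2' in Hxx. nra. }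
    apply Rmult_lt_reg_r with w. lra. replace (x / w * w) with x by (field; lra). exact Hdw. }
  set (Phi := fun r => / (2 * k ^ 2) * Psi (asin (k * r))).
  assert (HdPhi : forall r, 0 < r < a -> is_derive Phi r (r * X r)).
  { intros r Hr. pose proof (Hkr r Hr) as Hx.
    assert (Dk : is_derive (fun r => k * r) r k) by (auto_derive; [auto | ring]).
    pose proof (is_derive_comp asin (fun r => k * r) r _ _ (is_derive_asin (k * r) ltac:(lra)) Dk) as D1.
    assert (D2 : is_derive Psi (asin (k * r)) (2 * sin (asin (k * r)) ^ 2)).
    { unfold Psi. auto_derive. auto. pose proof (sin2_cos2 (asin (k * r))). unfold Rsqr in H. nra. }
    pose proof (is_derive_comp Psi (fun x => asin (k * x)) r _ _ D2 D1) as D3.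
    pose proof (is_derive_scal _ _ (/ (2 * k ^ 2)) _ D3) as D4.
    apply (is_derive_eq _ _ _ _ D4).
    change (/ (2 * k ^ 2) * (k * (1 / sqrt (1 - (k * r)²)) * (2 * sin (asin (k * r)) ^ 2)) = r * X r).
    rewrite sin_asin by lra. unfold X, Rsqr.
    replace ((k * r) ^ 2) with (k * r * (k * r)) by ring.
    assert (0 < sqrt (1 - k * r * (k * r))) by (apply sqrt_lt_R0; nra).
    field. lra. }
  set (H := fun r => r * u r + (- / kappa) * s r - Phi r).
  assert (HdH : forall r, 0 < r < a -> is_derive (fun x => - H x) r (r * (X r - du r))).
  { intros r Hr.
    assert (Did : is_derive (fun x => x) r 1) by (auto_derive; [auto | ring]).
    pose proof (is_derive_mult (fun x => x) u r 1 (du r) Did (Hdu r Hr) Rmult_comm) as Da.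
    pose proof (is_derive_scal s r (- / kappa) _ (Hds r Hr)) as Db.
    pose proof (is_derive_plus _ _ _ _ _ Da Db) as Dc.
    pose proof (is_derive_minus _ _ _ _ _ Dc (HdPhi r Hr)) as Dd.
    pose proof (is_derive_opp _ _ _ Dd) as De.
    apply (is_derive_eq _ _ _ _ De).
    change (- (1 * u r + r * du r + - / kappa * (kappa * u r) - r * X r) = r * (X r - du r)).
    field. lra. }
  assert (Hdec : forall x y, 0 < x -> x < y -> y < a -> H y < H x).
  { intros x y Hx Hxy Hy.
    assert (- H x < - H y).
    { apply (incr (fun x => - H x) (fun r => r * (X r - du r)) 0 a); auto.
      intros t Ht. apply Rmult_lt_0_compat. lra. pose proof (HX t Ht). lra. }
    lra. }
  assert (Hc2 : 0 < / (2 * k ^ 2)).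
  { apply Rinv_0_lt_compat. pose proof (pow_lt k 2 Hk0). lra. }
  assert (HPhi0 : forall r, 0 < r < a -> 0 <= Phi r).
  { intros r Hr. pose proof (Hkr r Hr) as Hkr'. unfold Phi.
    assert (HP : Psi 0 <= Psi (asin (k * r))).
    { apply Psi_mono. rewrite <- asin_0 at 1. apply asin_mono; lra. }
    replace (Psi 0) with 0 in HP by (unfold Psi; rewrite sin_0; ring). 
    apply Rmult_le_pos; lra. }
  set (Phia := / (2 * k ^ 2) * Psi (asin (cos gamma))).
  assert (HPhia : forall r, 0 < r < a -> Phi r <= Phia).
  { intros r Hr. pose proof (Hkr r Hr) as Hkr'. unfold Phi, Phia.
    apply Rmult_le_compat_l. lra. apply Psi_mono. apply asin_mono; try lra.
    assert (Hka : k * r < k * a) by (apply Rmult_lt_compat_l; lra).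
    replace (k * a) with (cos gamma) in Hka by (unfold k; field; lra). lra. }
  assert (HHneg : H (a / 2) < 0).
  { assert (HL : filterlim (fun x => x * u x + (- / kappa) * s x) (at_right 0)
                   (locally (0 * u0 + (- / kappa) * 0))).
    { apply (lim_add (at_right 0)). apply (lim_mul (at_right 0)). apply lim_id_right. exact Hur.
      apply (lim_mul (at_right 0)). apply (lim_const (at_right 0)). exact Hsr. }
    assert (H (a / 4) <= 0 * u0 + (- / kappa) * 0).
    { apply (lim_ge (at_right 0) _ _ _ HL). apply ev_right with (q := a / 4). lra.
      intros x Hx. assert (Hh : H (a/4) < H x) by (apply Hdec; lra).
      pose proof (HPhi0 x ltac:(lra)) as Hp. unfold H in Hh at 2. lra. }
    assert (H (a/2) < H (a/4)) by (apply Hdec; lra). lra. }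
  assert (HHa : a * u a + (- / kappa) * cos gamma <= H (a / 2) + Phia).
  { assert (HL : filterlim (fun x => x * u x + (- / kappa) * s x) (at_left a)
                   (locally (a * u a + (- / kappa) * cos gamma))).
    { apply (lim_add (at_left a)). apply (lim_mul (at_left a)). apply lim_id_left. exact Hua.
      apply (lim_mul (at_left a)). apply (lim_const (at_left a)). exact Hsa. }
    apply (lim_le (at_left a) _ _ _ HL). apply ev_left with (p := a / 2). lra.
    intros x Hx. assert (Hh : H x < H (a/2)) by (apply Hdec; lra).
    pose proof (HPhia x ltac:(lra)) as Hp. unfold H in Hh at 1. lra. }
  assert (Has : asin (cos gamma) = PI / 2 - gamma).
  { rewrite <- sin_shift. apply asin_sin. lra. }
  assert (HPsi : Psi (asin (cos gamma)) = PI / 2 - gamma - cos gamma * sin gamma).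
  { rewrite Has. unfold Psi. rewrite sin_shift, cos_shift. ring. }
  unfold Phia in HHa. rewrite HPsi in HHa. unfold k in HHa.
  assert (Hcne : cos gamma <> 0) by lra.
  assert (Efin : (cos gamma / (kappa * a) - a / 2 * tan gamma
        + a / (2 * cos gamma ^ 2) * (PI / 2 - gamma)) * a
        = - (- / kappa) * cos gamma + / (2 * (cos gamma / a) ^ 2) * (PI / 2 - gamma - cos gamma * sin gamma)).
  { unfold tan. field. lra. }
  apply Rmult_lt_reg_r with a. lra. rewrite Efin. lra.
Qed.
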